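(* Let $e,e'$ be distinct edges in a hypergraph $H=(V,E)$ and let $k$ be a positive integer. (1) If $\gamma_H(e)\ge k$ and $e'$ is a $k$-weak edge, then $\gamma_H(e)=\gamma_{H'}(e)$ where $H'=H\setminus e'$. (2) Suppose $\gamma_H(e)<k$ and $e'$ is a $k$-strong edge. Let $H'=H/e'$ be obtained by contracting $e'$. If $f$ is the edge of $H'$ corresponding to $e$, then $\gamma_H(e)=\gamma_{H'}(f)$.
   Context: A hypergraph $H=(V,E)$ has edges that are subsets of $V$. For $U\subseteq V$, $H[U]=(U,\{e\in E:e\subseteq U\})$. For $A\subseteq V$, $\delta_H(A)$ is the set of edges meeting both $A$ and $V\setminus A$; $\lambda(H)=\min_{\emptyset\subsetneq A\subsetneq V}|\delta_H(A)|$. The strength of $e$ is $\gamma_H(e)=\max_{e\subseteq U\subseteq V}\lambda(H[U])$. An edge $e$ is $k$-strong if $\gamma_H(e)\ge k$ and $k$-weak otherwise. $H\setminus e'$ denotes deletion of $e'$. Contracting $e'$ yields $H/e'$: all vertices of $e'$ are identified into one new vertex $v_{e'}$; edges contained in $e'$ are removed; every other edge $g$ meeting $e'$ has $g\cap e'$ replaced by $v_{e'}$. *)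

(* Defs.v *)
From mathcomp Require Import all_boot.
Set Implicit Arguments. Unset Strict Implicit. Unset Printing Implicit Defensive.

(* Edges are identified by labels, so that after a
   contraction "the edge corresponding to e" is simply the same label e. *)
Record hypergraph (V I : finType) := Hypergraph {
  hverts : {set V};
  hedges : {set I};
  hinc : I -> {set V} }.

Section Hyp.
Variables (V I : finType).
Implicit Types (H : hypergraph V I) (A U : {set V}) (i : I).

Definition wf_hypergraph H := forall i, i \in hedges H -> hinc H i \subset hverts H.

Definition delta H A : {set I} :=
  [set i in hedges H | (hinc H i :&: A != set0)
                       && (hinc H i :&: (hverts H :\: A) != set0)].

Definition cuts H : {set {set V}} :=
  [set A : {set V} | (set0 \proper A) && (A \proper hverts H)].

(* lambda(H) = min over cuts of |delta_H(A)|; the default #|hedges H| is an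
   upper bound of every |delta_H(A)|, so this is the true minimum whenever a
   cut exists.  Convention: lambda = 0 when there is no cut (<= 1 vertex). *)
Definition lambda H : nat :=
  if cuts H == set0 then 0
  else \big[minn/#|hedges H|]_(A in cuts H) #|delta H A|.

Definition induced H U : hypergraph V I :=
  Hypergraph U [set i in hedges H | hinc H i \subset U] (hinc H).

Definition strength H i : nat :=
  \max_(U : {set V} | (hinc H i \subset U) && (U \subset hverts H))
     lambda (induced H U).

Definition delete H i' : hypergraph V I :=
  Hypergraph (hverts H) (hedges H :\ i') (hinc H).

(* contraction H / e': the vertices of e' are identified into the new vertex
   None; the other vertices v become Some v; edges contained in e' are
   removed; any other edge g meeting e' has g :&: e' replaced by None. *)
Definition contract H i' : hypergraph (option V) I :=
  let c := hinc H i' in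
  Hypergraph (None |: (Some @: (hverts H :\: c)))
             [set i in hedges H | ~~ (hinc H i \subset c)]
             (fun i => if [disjoint hinc H i & c] then Some @: hinc H i
                       else None |: (Some @: (hinc H i :\: c))).

End Hyp.

(* Main.v *)
Require Import Defs.
From mathcomp Require Import all_boot.
Set Implicit Arguments. Unset Strict Implicit. Unset Printing Implicit Defensive.

Section B.
Variables (V I : finType).
Implicit Types (H : hypergraph V I) (A U : {set V}) (i : I).

Lemma cutsP H A : reflect ((exists a, a \in A) /\ A \subset hverts H /\
   exists2 w, w \in hverts H & w \notin A) (A \in cuts H).
Proof.
rewrite inE proper0; apply: (iffP andP).
  case=> /set0Pn [a Ha] /properP [s [w Hw Hw']]; split; first by exists a.
  by split=> //; exists w.
case=> [[a Ha] [s [w Hw Hw']]]; split; first by apply/set0Pn; exists a.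
by apply/properP; split=> //; exists w.
Qed.

Lemma deltaP H A i : reflect (i \in hedges H /\ (exists2 u, u \in hinc H i & u \in A) /\
   (exists w, [/\ w \in hinc H i, w \in hverts H & w \notin A])) (i \in delta H A).
Proof.
rewrite inE; apply: (iffP andP).
  case=> hi /andP [/set0Pn [u] /setIP [u1 u2] /set0Pn [w] /setIP [w1 /setDP [w2 w3]]].
  by split=> //; split; [exists u | exists w].
case=> hi [[u u1 u2] [w [w1 w2 w3]]]; split=> //; apply/andP; split; apply/set0Pn.
  by exists u; apply/setIP.
by exists w; apply/setIP; split=> //; apply/setDP.
Qed.

Lemma delta_sub H A : delta H A \subset hedges H.
Proof. by apply/subsetP=> i /deltaP []. Qed.

Lemma bigmin_le (T : finType) (P : pred T) (F : T -> nat) d a : P a ->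
  \big[minn/d]_(j | P j) F j <= F a.
Proof.
move=> Pa; have : a \in index_enum T by rewrite mem_index_enum.
elim: (index_enum T) => [|x s IH] //; rewrite inE big_cons => /orP [/eqP ex|hs].
  by subst x; rewrite Pa geq_minl.
case: (P x); last exact: IH.
by rewrite geq_min IH ?orbT.
Qed.

Lemma lambda_ub H A : A \in cuts H -> lambda H <= #|delta H A|.
Proof.
move=> hA; rewrite /lambda; case: eqP => [E|_]; first by [].
exact: (bigmin_le (P := fun A => A \in cuts H)).
Qed.

Lemma lambda_lb H m : cuts H != set0 ->
  (forall A, A \in cuts H -> m <= #|delta H A|) -> m <= lambda H.
Proof.
move=> hne hm; rewrite /lambda (negbTE hne).
apply: (big_ind (fun x => m <= x)).
- case/set0Pn: hne => A hA; apply: leq_trans (hm A hA) _.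
  exact: subset_leq_card (delta_sub H A).
- by move=> x y hx hy; rewrite leq_min hx hy.
- by move=> A hA; apply: hm.
Qed.

Lemma lambda_pos H : 0 < lambda H -> cuts H != set0.
Proof. by rewrite /lambda; case: eqP. Qed.

Lemma strength_ge H i U : hinc H i \subset U -> U \subset hverts H ->
  lambda (induced H U) <= strength H i.
Proof. by move=> h1 h2; apply: (leq_bigmax_cond (F := fun U => lambda (induced H U))); rewrite h1 h2. Qed.

Lemma strength_le H i m : (forall U, hinc H i \subset U -> U \subset hverts H ->
   lambda (induced H U) <= m) -> strength H i <= m.
Proof. by move=> h; apply/bigmax_leqP => U /andP [h1 h2]; apply: h. Qed.

Lemma strength_ex H i : hinc H i \subset hverts H -> exists U,
  [/\ hinc H i \subset U, U \subset hverts H & strength H i = lambda (induced H U)].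
Proof.
move=> hs.
have hc : 0 < #|[pred U : {set V} | (hinc H i \subset U) && (U \subset hverts H)]|.
  by apply/card_gt0P; exists (hverts H); rewrite inE /= hs subxx.
case: (eq_bigmax_cond (fun U => lambda (induced H U)) hc) => U.
rewrite inE /= => /andP [h1 h2] h3; exists U; split=> //.
Qed.
End B.

Lemma lambda_mono (V1 V2 I : finType) (H1 : hypergraph V1 I) (H2 : hypergraph V2 I) : cuts H2 != set0 ->
  (forall A2, A2 \in cuts H2 -> exists2 A1, A1 \in cuts H1 & #|delta H1 A1| <= #|delta H2 A2|) ->
  lambda H1 <= lambda H2.
Proof.
move=> hne h; apply: lambda_lb => // A2 /h [A1 h1 h2].
exact: leq_trans (lambda_ub h1) h2.
Qed.


Section P2.
Variables (V I : finType) (H : hypergraph V I) (e' : I).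
Let c := hinc H e'.
Definition pr (v : V) : option V := if v \in c then None else Some v.

Lemma pr_None v : (pr v == None) = (v \in c).
Proof. by rewrite /pr; case: ifP. Qed.

Lemma pr_Some v w : (pr v == Some w) = (v \notin c) && (v == w).
Proof. by rewrite /pr; case: ifP. Qed.

Lemma pr_inj x y : pr x = pr y -> x \notin c -> x = y.
Proof.
move=> E hx; move: E; rewrite /pr (negbTE hx); case: ifP => // _ [] //.
Qed.

Lemma in_pr_img (g : {set V}) v : (Some v \in pr @: g) = (v \in g) && (v \notin c).
Proof.
apply/imsetP/andP.
  case=> u hu /esym /eqP; rewrite pr_Some => /andP [hc /eqP E]; subst u; by split.
case=> hv hc; exists v => //; by rewrite /pr (negbTE hc).
Qed.

Lemma None_pr_img (g : {set V}) : (None \in pr @: g) = ~~ [disjoint g & c].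
Proof.
apply/imsetP/idP.
  case=> u hu /esym /eqP; rewrite pr_None => hc.
  by apply/negP => /disjointFr /(_ hu); rewrite hc.
move=> /negP hd; case: (pickP (mem (g :&: c))) => [u|].
  by case/setIP => hu hc; exists u => //; rewrite /pr hc.
move=> h0; exfalso; apply: hd; rewrite -setI_eq0; apply/eqP/setP => x.
by have := h0 x; rewrite !inE => ->.
Qed.

Lemma hinc_contract g : hinc (contract H e') g = pr @: hinc H g.
Proof.
apply/setP => [[v|]]; rewrite ?in_pr_img ?None_pr_img /=; case: ifP => hd.
- rewrite (mem_imset _ _ Some_inj); case hv: (v \in hinc H g) => //=.
  by rewrite (disjointFr hd hv).
- by rewrite in_setU1 /= (mem_imset _ _ Some_inj) in_setD andbC.
- by apply/imsetP; case.
- by rewrite in_setU1 eqxx.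
Qed.


Lemma hedges_contract i : (i \in hedges (contract H e')) = (i \in hedges H) && ~~ (hinc H i \subset c).
Proof. by rewrite inE. Qed.

Lemma hverts_contract : hverts (contract H e') = None |: [set Some x | x in hverts H :\: c].
Proof. by []. Qed.

Lemma pr_c v : v \in c -> pr v = None.
Proof. by rewrite /pr => ->. Qed.

Lemma pr_nc v : v \notin c -> pr v = Some v.
Proof. by rewrite /pr => /negbTE ->. Qed.

End P2.

Lemma hedges_ind (V I : finType) (X : hypergraph V I) U i :
  (i \in hedges (induced X U)) = (i \in hedges X) && (hinc X i \subset U).
Proof. by rewrite inE. Qed.
Lemma hinc_ind (V I : finType) (X : hypergraph V I) U i : hinc (induced X U) i = hinc X i.
Proof. by []. Qed.
Lemma hverts_ind (V I : finType) (X : hypergraph V I) U : hverts (induced X U) = U.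
Proof. by []. Qed.

Section D.
Variables (V I : finType) (H : hypergraph V I) (e e' : I).
Hypotheses (wf : wf_hypergraph H) (he : e \in hedges H) (he' : e' \in hedges H).
Let c := hinc H e'.
Let Hc := contract H e'.
Let p := pr H e'.

Lemma dir_ge : ~~ (hinc H e \subset c) -> strength H e <= strength Hc e.
Proof.
move=> ns.
have [U [h1 h2 ->]] := strength_ex (wf he).
have hU : p @: U \subset hverts Hc.
  apply/subsetP => x /imsetP [v hv ->]; rewrite hverts_contract /p /pr.
  case: ifP => hvc; rewrite in_setU1 ?eqxx //; apply/orP; right.
  by rewrite (mem_imset _ _ Some_inj) in_setD hvc (subsetP h2 v hv).
apply: leq_trans (strength_ge (H := Hc) _ hU); last first.
  by rewrite hinc_contract imsetS.
case: (eqVneq (cuts (induced H U)) set0) => E.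
  by rewrite {1}/lambda E eqxx.
case/subsetPn: ns => u hu hnc.
have huU : u \in U by apply: (subsetP h1).
apply: lambda_mono.
  case/set0Pn: E => A /cutsP [[a ha] [hAU [w hw hwA]]].
  have [w' hw'U hw'u] : exists2 w', w' \in U & w' != u.
    case: (eqVneq a u) => [E|ne]; last by exists a => //; apply: (subsetP hAU).
    by exists w => //; apply/eqP => E'; subst; rewrite ha in hwA.
  apply/set0Pn; exists [set Some u]; apply/cutsP; split; first by exists (Some u); rewrite set11.
  rewrite hverts_ind; split.
    by rewrite sub1set -(pr_nc hnc); apply: imset_f.
  exists (p w'); first exact: imset_f.
  by rewrite in_set1 /p pr_Some negb_and hw'u orbT.
move=> As /cutsP [[a hA] [hAs [w hw hwA]]].
rewrite hverts_ind in hAs hw.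
exists [set v in U | p v \in As].
  apply/cutsP; rewrite hverts_ind; split.
    case/imsetP: (subsetP hAs a hA) => a' ha' Ea; subst a.
    by exists a'; rewrite inE ha' hA.
  split; first by apply/subsetP => v; rewrite inE => /andP [].
  case/imsetP: hw => w' hw' Ew; subst w.
  by exists w' => //; rewrite inE hw' hwA.
apply: subset_leq_card; apply/subsetP => g /deltaP [hg [[u1 hu1 hu1A] [w1 [hw1 hw1U hw1A]]]].
rewrite hedges_ind in hg; case/andP: hg => hgH hgU.
rewrite hinc_ind in hu1 hw1; rewrite hverts_ind in hw1U.
rewrite inE in hu1A; case/andP: hu1A => hu1U hu1A.
rewrite inE hw1U /= in hw1A.
apply/deltaP; rewrite hedges_ind hinc_ind hverts_ind hedges_contract hinc_contract hgH /=.
split.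
  apply/andP; split; last exact: imsetS.
  apply/negP => s.
  move: hu1A hw1A; rewrite /p !pr_c //; [by move=> ->| exact: (subsetP s)|exact: (subsetP s)].
split; first by exists (p u1) => //; apply: imset_f.
by exists (p w1); split => //; apply: imset_f.
Qed.


Lemma dir_le (k : nat) : 0 < k -> strength H e < k -> k <= strength H e' ->
  strength Hc e <= strength H e.
Proof.
move=> k0 hk hk'.
apply: strength_le => Us h1 h2.
set m := lambda (induced Hc Us).
case: (posnP m) => [->|m0] //.
have hcut := lambda_pos m0.
set U := [set v in hverts H | p v \in Us].
have heU : hinc H e \subset U.
  apply/subsetP => v hv; rewrite inE (subsetP (wf he) v hv) /=.
  by apply: (subsetP h1); rewrite hinc_contract; apply: imset_f.
have hUv : U \subset hverts H by apply/subsetP => v; rewrite inE => /andP [].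
have gU : forall g, g \in hedges Hc -> hinc Hc g \subset Us -> hinc H g \subset U.
  move=> g; rewrite hedges_contract hinc_contract => /andP [hgH _] hs.
  apply/subsetP => v hv; rewrite inE (subsetP (wf hgH) v hv) /=.
  by apply: (subsetP hs); apply: imset_f.
case: (boolP (None \in Us)) => hN.
  case: (set_0Vmem c) => [c0 | [c0 hc0]].
    exfalso; move: m0; rewrite /m.
    case/set0Pn: hcut => B /cutsP [[b hb] [hBs [w hw hwB]]].
    rewrite hverts_ind in hBs hw.
    have [y hy hyN] : exists2 y, y \in Us & y != None.
      case: (eqVneq b None) => [Eb|nb]; last by exists b => //; apply: (subsetP hBs).
      by exists w => //; apply/eqP => Ew; subst; rewrite hb in hwB.
    have hd : delta (induced Hc Us) [set None] = set0.
      apply/setP => g; rewrite in_set0; apply/negP => /deltaP [_ [[u hu]]].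
      rewrite in_set1 => /eqP Eu; subst u.
      move: hu; rewrite hinc_ind hinc_contract => /imsetP [v _ /esym /eqP].
      by rewrite pr_None -/c c0 inE.
    have hl : lambda (induced Hc Us) <= 0.
      rewrite -(cards0 I) -hd; apply: lambda_ub.
      apply/cutsP; rewrite hverts_ind; split; first by exists None; rewrite set11.
      by split; [rewrite sub1set | exists y => //; rewrite in_set1].
    by move: hl; rewrite leqn0 => /eqP ->.
  have [W [cW Wv hW]] := strength_ex (wf he').
  rewrite hW in hk'.
  have c0U : c0 \in U by rewrite inE (subsetP (wf he') c0 hc0) /p pr_c.
  set X := U :|: W.
  have hX : minn m k <= lambda (induced H X).
    apply: lambda_lb.
      have := lambda_pos (leq_trans k0 hk').
      case/set0Pn => B /cutsP [[b hb] [hBW [w hw hwB]]].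
      rewrite hverts_ind in hBW hw.
      apply/set0Pn; exists B; apply/cutsP; rewrite hverts_ind; split; first by exists b.
      split; first exact: subset_trans hBW (subsetUr _ _).
      by exists w => //; rewrite inE hw orbT.
    move=> A /cutsP [[a ha] [hAX [w hw hwA]]].
    rewrite hverts_ind in hAX hw.
    case: (boolP ([exists x, (x \in W) && (x \in A)] && [exists y, (y \in W) && (y \notin A)])).
      case/andP => /existsP [x /andP [xW xA]] /existsP [y /andP [yW yA]].
      rewrite geq_min; apply/orP; right; apply: leq_trans hk' _.
      apply: (@leq_trans #|delta (induced H W) (A :&: W)|).
        apply: lambda_ub; apply/cutsP; rewrite hverts_ind; split.
          by exists x; rewrite inE xA xW.
        split; first exact: subsetIr.
        by exists y => //; rewrite inE (negbTE yA).
      apply: subset_leq_card; apply/subsetP => g /deltaP [hg [[u hu huA] [w1 [hw1 hw1W hw1A]]]].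
      rewrite hedges_ind in hg; case/andP: hg => hgH hgW.
      rewrite hverts_ind in hw1W.
      apply/deltaP; rewrite hedges_ind hverts_ind hgH (subset_trans hgW (subsetUr _ _)); split => //.
      split; first by exists u => //; move: huA; rewrite inE => /andP [].
      exists w1; split => //; first by rewrite inE hw1W orbT.
      by apply/negP => h; rewrite inE h hw1W in hw1A.
    move=> nsplit.
    have Hcoh : forall x y, x \in c -> y \in c -> x \in A -> y \in A.
      move=> x y xc yc xA; apply/negP => yA; apply: (negP nsplit).
      apply/andP; split; apply/existsP; [exists x | exists y]; apply/andP; split => //.
      - exact: (subsetP cW x xc).
      - exact: (subsetP cW y yc).
      - exact/negP.
    have inA : forall u, p u \in p @: (A :&: U) -> u \in A.
      move=> u /imsetP [a' /setIP [ha' _] E].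
      case: (boolP (u \in c)) => huc.
        apply: (Hcoh a') => //; apply/negPn/negP => hac.
        by move: E; rewrite /p pr_c // pr_nc.
      by rewrite (pr_inj E huc).
    have notin : forall w, w \notin A -> p w \notin p @: (A :&: U).
      by move=> w' hw'; apply/negP => /inA; rewrite (negbTE hw').
    have [a1 ha1A ha1U] : exists2 a1, a1 \in A & a1 \in U.
      move: (subsetP hAX a ha); rewrite inE => /orP [haU|haW]; first by exists a.
      exists c0 => //; apply/negPn/negP => c0A; apply: (negP nsplit).
      apply/andP; split; apply/existsP; [exists a | exists c0]; apply/andP; split => //; exact: (subsetP cW).
    have [w2 hw2A hw2U] : exists2 w2, w2 \notin A & w2 \in U.
      move: hw; rewrite inE => /orP [hwU|hwW]; first by exists w.
      exists c0 => //; apply/negP => c0A; apply: (negP nsplit).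
      apply/andP; split; apply/existsP; [exists c0 | exists w]; apply/andP; split => //; exact: (subsetP cW).
    rewrite geq_min; apply/orP; left.
    apply: (@leq_trans #|delta (induced Hc Us) (p @: (A :&: U))|).
      apply: lambda_ub; apply/cutsP; rewrite hverts_ind; split.
        by exists (p a1); apply: imset_f; rewrite inE ha1A ha1U.
      split.
        apply/subsetP => x /imsetP [v /setIP [_ hv] ->].
        by move: hv; rewrite inE => /andP [].
      exists (p w2); last exact: notin.
      by move: hw2U; rewrite inE => /andP [].
    apply: subset_leq_card; apply/subsetP => g /deltaP [hg [[x1 hx1 hx1A] [y1 [hy1 hy1U hy1A]]]].
    rewrite hedges_ind in hg; case/andP: hg => hgc hgs.
    have hgU := gU g hgc hgs.
    rewrite hinc_ind hinc_contract in hx1 hy1.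
    case/imsetP: hx1 => u hu Eu; subst x1.
    case/imsetP: hy1 => w1 hw1 Ew1; subst y1.
    move: hgc; rewrite hedges_contract => /andP [hgH _].
    apply/deltaP; rewrite hedges_ind hinc_ind hverts_ind hgH (subset_trans hgU (subsetUl _ _)).
    split => //; split; first by exists u => //; apply: inA.
    exists w1; split => //; first by rewrite inE (subsetP hgU w1 hw1).
    apply/negP => hw1A; rewrite imset_f // in hy1A.
    by rewrite inE hw1A (subsetP hgU w1 hw1).
  have hXv : X \subset hverts H by rewrite subUset hUv Wv.
  have := leq_trans hX (strength_ge (subset_trans heU (subsetUl _ _)) hXv).
  rewrite geq_min => /orP [//|hh].
  by have := leq_ltn_trans hh hk; rewrite ltnn.
have notcU : forall v, v \in U -> v \notin c.
  move=> v; rewrite inE => /andP [_ hv]; apply/negP => hvc.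
  by move: hv; rewrite /p pr_c // (negbTE hN).
have UsU : forall x, x \in Us -> exists2 v, v \in U & x = p v.
  move=> x hx; move: (subsetP h2 x hx); rewrite hverts_contract in_setU1.
  case/orP => [/eqP Ex|]; first by subst x; rewrite hx in hN.
  case/imsetP => v /setDP [hv hvc] Ex; exists v; last by rewrite /p pr_nc.
  by rewrite inE hv /p pr_nc // -Ex hx.
apply: leq_trans (strength_ge heU hUv).
apply: lambda_mono.
  case/set0Pn: hcut => B /cutsP [[b hb] [hBs [w hw hwB]]].
  rewrite hverts_ind in hBs hw.
  case: (UsU b (subsetP hBs b hb)) => b' hb' Eb.
  case: (UsU w hw) => w' hw' Ew.
  apply/set0Pn; exists [set b']; apply/cutsP; rewrite hverts_ind; split.
    by exists b'; rewrite set11.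
  split; first by rewrite sub1set.
  exists w' => //; rewrite in_set1; apply/eqP => E; subst.
  by rewrite hb in hwB.
move=> A /cutsP [[a ha] [hAU [w hw hwA]]].
rewrite hverts_ind in hAU hw.
exists (p @: A).
  apply/cutsP; rewrite hverts_ind; split; first by exists (p a); apply: imset_f.
  split.
    apply/subsetP => x /imsetP [v hv ->].
    by move: (subsetP hAU v hv); rewrite inE => /andP [].
  exists (p w); first by move: hw; rewrite inE => /andP [].
  apply/imsetP => [[a' ha' E]].
  by move: (pr_inj E (notcU w hw)) => Ew; subst; rewrite ha' in hwA.
apply: subset_leq_card; apply/subsetP => g /deltaP [hg [[x1 hx1 hx1A] [y1 [hy1 hy1U hy1A]]]].
rewrite hedges_ind in hg; case/andP: hg => hgc hgs.
have hgU := gU g hgc hgs.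
rewrite hinc_ind hinc_contract in hx1 hy1.
case/imsetP: hx1 => u hu Eu; subst x1.
case/imsetP: hy1 => w1 hw1 Ew1; subst y1.
move: hgc; rewrite hedges_contract => /andP [hgH _].
apply/deltaP; rewrite hedges_ind hinc_ind hverts_ind hgH hgU; split => //; split.
  exists u => //; case/imsetP: hx1A => a' ha' E.
  by rewrite (pr_inj E (notcU u (subsetP hgU u hu))).
exists w1; split => //; first exact: (subsetP hgU).
by apply/negP => hw1A; rewrite imset_f in hy1A.
Qed.

End D.

Lemma lambda_sub (V I : finType) (H1 H2 : hypergraph V I) :
  hverts H1 = hverts H2 -> (forall A, delta H1 A \subset delta H2 A) ->
  lambda H1 <= lambda H2.
Proof.
move=> hv hd.
have hc : cuts H1 = cuts H2 by rewrite /cuts hv.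
case: (eqVneq (cuts H2) set0) => E.
  by rewrite /lambda hc E eqxx.
apply: lambda_mono => // A hA; exists A; first by rewrite hc.
exact: subset_leq_card.
Qed.

Lemma part1 (V I : finType) (H : hypergraph V I) (e e' : I) (k : nat) :
  wf_hypergraph H -> e \in hedges H -> e' \in hedges H ->
  k <= strength H e -> strength H e' < k ->
     strength H e = strength (delete H e') e.
Proof.
move=> wf he he' hk hk'.
apply/eqP; rewrite eqn_leq; apply/andP; split.
  have [U [h1 h2 hU]] := strength_ex (wf e he).
  have ne : ~~ (hinc H e' \subset U).
    apply/negP => s; have := strength_ge s h2.
    by rewrite -hU => /(leq_trans hk) /(leq_trans hk'); rewrite ltnn.
  rewrite hU; have -> : induced H U = induced (delete H e') U.
    rewrite /induced /delete /=; congr Hypergraph; apply/setP => i; rewrite !inE.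
    by case: (eqVneq i e') => [->|] //=; rewrite (negbTE ne) andbF.
  by apply: strength_ge.
apply: strength_le => U h1 h2.
apply: (@leq_trans (lambda (induced H U))); last exact: (strength_ge (H := H) h1 h2).
apply: lambda_sub => // A. apply/subsetP => i /deltaP [hi [hu hw]].
apply/deltaP; split=> //; move: hi; rewrite !inE => /andP [/andP [_ ->] ->].
by [].
Qed.

Theorem lemma2p3 (V I : finType) (H : hypergraph V I) (e e' : I) (k : nat) :
  wf_hypergraph H -> e \in hedges H -> e' \in hedges H -> e != e' -> 0 < k ->
  (k <= strength H e -> strength H e' < k ->
     strength H e = strength (delete H e') e) /\
  (strength H e < k -> k <= strength H e' ->
     strength H e = strength (contract H e') e).
Proof.
move=> wf he he' _ k0; split.
  by move=> h1 h2; apply: (part1 wf he he' h1 h2).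
move=> h1 h2.
have ns : ~~ (hinc H e \subset hinc H e').
  apply/negP => s.
  have : strength H e' <= strength H e.
    apply: strength_le => U s1 s2; apply: strength_ge => //.
    exact: subset_trans s s1.
  by move=> /(leq_trans h2) /(leq_ltn_trans)/(_ h1); rewrite ltnn.
apply/eqP; rewrite eqn_leq (dir_ge wf he ns) /=.
exact: (dir_le wf he he' k0 h1 h2).
Qed.
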